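(* For every \textsc{Strip Cover} instance $(x,b)$, $\mathrm{RR}(x,b)=\sum_{i=1}^n b_i/r_i\ge\frac{2}{3}\,\mathrm{Opt}_{SC}(x,b)$, where $r_i=\max\{x_i,1-x_i\}$ and $\mathrm{Opt}_{SC}(x,b)$ is the optimal \textsc{Strip Cover} lifetime. That is, \textsc{RoundRobin} is a $\frac{3}{2}$-approximation algorithm for \textsc{Strip Cover}.
   Context: \textsc{Strip Cover}: An instance is a pair $(x,b)$, where $x=(x_1,\ldots,x_n)\in[0,1]^n$ with $x_1\le\cdots\le x_n$ are sensor locations and $b=(b_1,\ldots,b_n)$, $b_i\ge0$ rational, are battery charges. A solution is a vector $\rho(t)=(\rho_1(t),\ldots,\rho_n(t))$ of piecewise constant functions $\rho_i:[0,\infty)\to[0,\infty)$ with finitely many pieces (the radius of sensor $i$ at time $t$), subject to $\int_0^\infty\rho_i(t)\,dt\le b_i$ for every $i$. The interval $[0,1]$ is covered at time $t$ if $[0,1]\subseteq\bigcup_i[x_i-\rho_i(t),x_i+\rho_i(t)]$. The lifetime of a solution is the maximum $T$ such that $[0,1]$ is covered at all $t\in[0,T]$; $\mathrm{Opt}_{SC}(x,b)$ is the maximum lifetime. The \textsc{RoundRobin} solution lets the sensors take turns in order $1,\ldots,n$, sensor $i$ alone using radius $r_i=\max\{x_i,1-x_i\}$ (which covers $[0,1]$) for $b_i/r_i$ time units, giving lifetime $\mathrm{RR}(x,b)=\sum_i b_i/r_i$. *)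

(* Defs.v *)
From HB Require Import structures.
From mathcomp Require Import all_boot all_order all_algebra.
From mathcomp Require Import all_classical all_reals all_analysis.
Set Implicit Arguments. Unset Strict Implicit. Unset Printing Implicit Defensive.
Import Order.TTheory GRing.Theory Num.Theory.
Local Open Scope classical_set_scope.
Local Open Scope ring_scope.

Section StripCover.
Variable R : realType.

Definition piecewise_constant (f : R -> R) : Prop :=
  (forall t, 0 <= t -> 0 <= f t) /\
  exists s : seq R, forall t u, 0 <= t -> t <= u ->
    (forall p, p \in s -> ~ (t <= p <= u)) -> f t = f u.

Definition energy (f : R -> R) : \bar R :=
  (\int[@lebesgue_measure R]_(t in [set t : R | (0 <= t)%R]) (f t)%:E)%E.

Definition covered n (x : 'I_n -> R) (rho : 'I_n -> R -> R) (t : R) : Prop :=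
  forall y : R, 0 <= y <= 1 ->
    exists i : 'I_n, x i - rho i t <= y <= x i + rho i t.

Definition sc_solution n (b : 'I_n -> R) (rho : 'I_n -> R -> R) : Prop :=
  forall i, piecewise_constant (rho i) /\ (energy (rho i) <= (b i)%:E)%E.

Definition lifetime_at_least n (x : 'I_n -> R) (rho : 'I_n -> R -> R) (T : R) :=
  forall t, 0 <= t <= T -> covered x rho t.

Definition RR n (x b : 'I_n -> R) : R :=
  \sum_(i < n) b i / Num.max (x i) (1 - x i).

End StripCover.

(* Main.v *)
Require Import Defs.
From HB Require Import structures.
From mathcomp Require Import all_boot all_order all_algebra.
From mathcomp Require Import all_classical all_reals all_analysis.
From mathcomp Require Import measurable_realfun.
From mathcomp Require Import ring lra.
Import Order.TTheory GRing.Theory Num.Theory.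
Local Open Scope ring_scope.

Section F.
Variable R : realFieldType.
Implicit Types x p z u v : R.

Definition Fz z : R :=
  if z <= 0 then 0 else if z <= 1/2 then z / (2 - z)
  else if z <= 1 then 2/3 - (1 - z) / (1 + z) else 2/3.

Lemma div_le (a b c d : R) : 0 < b -> 0 < d -> a * d <= c * b -> a / b <= c / d.
Proof.
move=> hb hd h; rewrite ler_pdivrMr // mulrAC ler_pdivlMr //.
Qed.

Lemma Fz0 {z} : z <= 0 -> Fz z = 0.
Proof. by rewrite /Fz => ->. Qed.
Lemma Fz1 {z} : 0 < z -> z <= 1/2 -> Fz z = z / (2 - z).
Proof. by move=> h1 h2; rewrite /Fz h2 ifF //; apply/negbTE; rewrite -ltNge. Qed.
Lemma Fz2 {z} : 1/2 < z -> z <= 1 -> Fz z = 2/3 - (1 - z) / (1 + z).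
Proof.
move=> h1 h2; rewrite /Fz h2 ifF; last by apply/negbTE; rewrite -ltNge; lra.
by rewrite ifF //; apply/negbTE; rewrite -ltNge.
Qed.
Lemma Fz3 {z} : 1 < z -> Fz z = 2/3.
Proof.
move=> h; rewrite /Fz ifF; last by apply/negbTE; rewrite -ltNge; lra.
rewrite ifF; last by apply/negbTE; rewrite -ltNge; lra.
by rewrite ifF //; apply/negbTE; rewrite -ltNge.
Qed.

Lemma pieceA {u} : 0 < u -> u <= 1/2 -> 0 <= u / (2 - u) <= 1/3.
Proof.
move=> h1 h2; apply/andP; split; first by apply: divr_ge0; lra.
apply: div_le; lra.
Qed.

Lemma pieceB {u} : 1/2 < u -> u <= 1 -> 0 <= (1 - u) / (1 + u) <= 1/3.
Proof.
move=> h1 h2; apply/andP; split; first by apply: divr_ge0; lra.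
apply: div_le; lra.
Qed.

Ltac fzcase z :=
  let h := fresh "h" in let h' := fresh "h" in
  case: (lerP z 0) => h;
  [ rewrite (Fz0 h) | case: (lerP z (1/2)) => h';
    [ rewrite (Fz1 h h'); move: (pieceA h h') => /andP[? ?] | clear h; case: (lerP z 1) => h;
      [ rewrite (Fz2 h' h); move: (pieceB h' h) => /andP[? ?] | rewrite (Fz3 h) ] ] ].

Lemma Fz_sym z : Fz (1 - z) = 2/3 - Fz z.
Proof.
fzcase (1 - z); fzcase z; try (exfalso; lra).
all: first [ solve [ring]
  | solve [(have -> : z = 1 by lra); by field]
  | solve [(have -> : z = 1/2 by lra); by field]
  | solve [(have -> : z = 0 by lra); by field]
  | solve [rewrite (_ : 2 - (1 - z) = 1 + z); [ring|ring]]
  | solve [rewrite (_ : 1 - (1 - z) = z); [|ring]; rewrite (_ : 1 + (1 - z) = 2 - z); [ring|ring]] ].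
Qed.



Lemma Fz_mono u v : u <= v -> Fz u <= Fz v.
Proof.
move=> huv.
fzcase u; fzcase v; try (exfalso; lra); try lra.
- apply: div_le; nra.
- have : (1 - v) / (1 + v) <= (1 - u) / (1 + u) by apply: div_le; nra.
  lra.
Qed.


Lemma A_half (x p : R) : 0 <= x -> x <= 1/2 -> 0 <= p ->
  Fz (x + p) - Fz (x - p) <= p / (1 - x).
Proof.
move=> hx0 hx1 hp.
have hpx : 0 <= p / (1 - x) by apply: divr_ge0; lra.
fzcase (x + p); fzcase (x - p); try (exfalso; lra); try lra.
- rewrite subr0; apply: div_le; try lra.
  have : 0 <= (p - x) * (1 - x - p) by apply: mulr_ge0; lra.
  nra.
- have -> : (x + p) / (2 - (x + p)) - (x - p) / (2 - (x - p)) =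
     (4 * p) / ((2 - (x + p)) * (2 - (x - p))).
    by field; apply/andP; split; apply/eqP; lra.
  apply: div_le; try nra.
  have : 0 <= p * ((x - p) * (x + p)) by apply: mulr_ge0; try nra.
  nra.
- have -> : 2 / 3 - (1 - (x + p)) / (1 + (x + p)) - 0 =
     (5 * (x + p) - 1) / (3 * (1 + (x + p))).
    by field; apply/eqP; lra.
  apply: div_le; try lra.
  have : 0 <= (4 - 2 * (x + p)) * (p - x) by apply: mulr_ge0; lra.
  nra.
- set a := x - p. set b := x + p.
  have -> : 2 / 3 - (1 - b) / (1 + b) - a / (2 - a) =
     (2 * (1 + b) * (2 - a) - 3 * (1 - b) * (2 - a) - 3 * a * (1 + b))
      / (3 * (1 + b) * (2 - a)).
    by field; apply/andP; split; apply/eqP; rewrite /a /b; lra.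
  apply: div_le; rewrite /a /b; try nra.
  set u := 1/2 - x. set v := p + x - 1/2. set s := x - p. set w := x - 1/4.
  have hu : 0 <= u by rewrite /u; lra.
  have hv : 0 <= v by rewrite /v; lra.
  have hs : 0 <= s by rewrite /s; lra.
  have hw : 0 <= w by rewrite /w; lra.
  have hK : 0 <= 3/2 * u * s + v * w * (3 + 10 * u) + 5 * v ^+ 2 + 3 * v ^+ 3 + u * v ^+ 2.
    have k1 : 0 <= 3/2 * u * s by apply: mulr_ge0 => //; apply: mulr_ge0 => //; lra.
    have k2 : 0 <= v * w * (3 + 10 * u) by apply: mulr_ge0; [apply: mulr_ge0|lra].
    have k3 : 0 <= 5 * v ^+ 2 by apply: mulr_ge0; [lra|apply: exprn_ge0].
    have k4 : 0 <= 3 * v ^+ 3 by apply: mulr_ge0; [lra|apply: exprn_ge0].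
    have k5 : 0 <= u * v ^+ 2 by apply: mulr_ge0; [|apply: exprn_ge0].
    lra.
  rewrite -subr_ge0.
  have -> : p * (3 * (1 + (x + p)) * (2 - (x - p))) -
     (2 * (1 + (x + p)) * (2 - (x - p)) - 3 * (1 - (x + p)) * (2 - (x - p)) - 3 * (x - p) * (1 + (x + p))) * (1 - x)
     = 3/2 * u * s + v * w * (3 + 10 * u) + 5 * v ^+ 2 + 3 * v ^+ 3 + u * v ^+ 2.
    by rewrite /u /v /s /w; field.
  exact: hK.
- rewrite subr0 ler_pdivlMr; lra.
Qed.

Lemma A_full (x p : R) : 0 <= x -> x <= 1 -> 0 <= p ->
  Fz (x + p) - Fz (x - p) <= p / Num.max x (1 - x).
Proof.
move=> hx0 hx1 hp.
case: (lerP x (1/2)) => hx.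
- rewrite max_r; last lra. exact: A_half.
- rewrite max_l; last lra.
  have := @A_half (1 - x) p ltac:(lra) ltac:(lra) hp.
  rewrite (_ : x + p = 1 - (1 - x - p)); last ring.
  rewrite (_ : x - p = 1 - (1 - x + p)); last ring.
  rewrite !Fz_sym (_ : 1 - (1 - x) = x); last ring.
  lra.
Qed.
End F.

Section Cover.
Variable R : realFieldType.
Lemma cover_sum (F : R -> R) (Fm : forall u v, u <= v -> F u <= F v) n
  (lo hi : 'I_n -> R) (hlh : forall i, lo i <= hi i) (A : {set 'I_n}) (c d : R) :
  (forall y, c < y -> y <= d -> exists2 i, i \in A & lo i < y <= hi i) ->
  F d - F c <= \sum_(i in A) (F (hi i) - F (lo i)).
Proof.
have pos : forall B : {set 'I_n}, 0 <= \sum_(i in B) (F (hi i) - F (lo i)).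
  by move=> B; apply: sumr_ge0 => i _; rewrite subr_ge0; apply: Fm.
move: {2}#|A| (leqnn #|A|) => m; elim: m A c d => [|m IH] A c d hA hcov.
- case: (lerP d c) => hdc.
    by have := Fm _ _ hdc; have := pos A; lra.
  have [k kA _] := hcov d hdc (lexx d).
  by move: hA; rewrite (cardsD1 k A) kA.
- case: (lerP d c) => hdc.
    by have := Fm _ _ hdc; have := pos A; lra.
  have [k kA /andP[hk1 hk2]] := hcov d hdc (lexx d).
  rewrite (big_setD1 k kA) /=.
  case: (lerP (lo k) c) => hlc.
    have := Fm _ _ hlc; have := Fm _ _ hk2; have := pos (A :\ k); lra.
  have hIH : F (lo k) - F c <= \sum_(i in A :\ k) (F (hi i) - F (lo i)).
    apply: IH.
      by move: hA; rewrite (cardsD1 k A) kA.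
    move=> y hy1 hy2.
    have [i iA /andP[hi1 hi2]] := hcov y hy1 (le_trans hy2 (ltW hk1)).
    exists i => //; last by rewrite hi1 hi2.
    rewrite in_setD1 iA andbT; apply/eqP => eik; move: hi1; rewrite eik; lra.
  have := Fm _ _ hk2; lra.
Qed.
End Cover.

Section Pointwise.
Variable R : realFieldType.
Lemma pointwise n (x rh : 'I_n -> R) (hx : forall i, 0 <= x i <= 1)
  (hr : forall i, 0 <= rh i)
  (hcov : forall y, 0 <= y <= 1 -> exists i, x i - rh i <= y <= x i + rh i) :
  2/3 <= \sum_(i < n) rh i / Num.max (x i) (1 - x i).
Proof.
have hm : forall i, 1/2 <= Num.max (x i) (1 - x i).
  move=> i; have := hx i => /andP[? ?].
  case: (lerP (x i) (1/2)) => h; [rewrite max_r|rewrite max_l]; lra.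
have key : forall e, 0 < e ->
    2/3 <= \sum_(i < n) (rh i + e) / Num.max (x i) (1 - x i).
  move=> e he.
  have := @cover_sum R (@Fz R) (@Fz_mono R) n (fun i => x i - (rh i + e))
     (fun i => x i + rh i) _ [set: 'I_n]%SET 0 1.
  have f0 : @Fz R 0 = 0 by apply: Fz0.
  have f1 : @Fz R 1 = 2/3.
    by rewrite (@Fz2 R 1) ?subrr ?mul0r ?subr0 //; lra.
  rewrite f0 f1 subr0.
  move=> H; apply: le_trans (H _ _) _.
  - by move=> i /=; have := hr i; lra.
  - move=> y hy1 hy2.
    have [i /andP[h1 h2]] := hcov y ltac:(apply/andP; lra).
    exists i; first by rewrite inE.
    apply/andP; split => //; lra.
  - rewrite [X in X <= _](eq_bigl (fun _ => true)); last by move=> i; rewrite inE.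
    apply: ler_sum => i _.
    have := @Fz_mono R (x i + rh i) (x i + (rh i + e)) ltac:(lra).
    have := hx i => /andP[? ?].
    have := @A_full R (x i) (rh i + e) ltac:(lra) ltac:(lra) ltac:(have := hr i; lra).
    lra.
apply/ler_addgt0Pr => e he.
set e' := e / (2 * n%:R + 1).
have hn : 0 <= n%:R :> R by apply: ler0n.
have he' : 0 < e' by apply: divr_gt0; lra.
apply: le_trans (key e' he') _.
have -> : \sum_(i < n) (rh i + e') / Num.max (x i) (1 - x i) =
   \sum_(i < n) rh i / Num.max (x i) (1 - x i) +
   \sum_(i < n) e' / Num.max (x i) (1 - x i).
  by rewrite -big_split /=; apply: eq_bigr => i _; rewrite mulrDl.
rewrite lerD2l.
apply: (@le_trans _ _ (\sum_(i < n) 2 * e')).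
  apply: ler_sum => i _.
  have hmi := hm i.
  rewrite ler_pdivrMr; last lra.
  nra.
rewrite sumr_const card_ord.
have -> : (2 * e') *+ n = (2 * n%:R) * e' by rewrite -mulr_natr mulrAC.
rewrite /e' mulrA ler_pdivrMr; last lra.
nra.
Qed.
End Pointwise.

Local Open Scope classical_set_scope.
Section Meas.
Variable R : realType.

Lemma seq_measurable (l : seq R) : measurable [set t : R | t \in l].
Proof.
elim: l => [|a l IH].
  by rewrite (_ : [set t : R | t \in [::]] = set0) //; apply/seteqP; split => t //=.
rewrite (_ : [set t : R | t \in a :: l] = [set a] `|` [set t | t \in l]).
  by apply: measurableU => //; apply: measurable_set1.
apply/seteqP; split => t /=; rewrite in_cons.
  by case/orP => [/eqP ->|h]; [left|right].
by case => [->|->]; rewrite ?eqxx ?orbT.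
Qed.

Lemma exists_sep (t : R) (s : seq R) : 0 < t -> t \notin s ->
  exists2 e, 0 < e & (e <= t /\ forall p, p \in s -> ~ (t - e < p < t + e)).
Proof.
move=> ht; elim: s => [|a s IH].
  by move=> _; exists t => //; split => // p.
rewrite in_cons negb_or => /andP[hta hts].
have [e he [het hes]] := IH hts.
have [d hd hda] : exists2 d, 0 < d & ~ (t - d < a < t + d).
  case: (ltgtP t a) => h; last by rewrite h eqxx in hta.
  - by exists (a - t); [lra | move/andP; lra].
  - by exists (t - a); [lra | move/andP; lra].
exists (Num.min e d); first by rewrite lt_min he hd.
have m1 : Num.min e d <= e by rewrite ge_min lexx.
have m2 : Num.min e d <= d by rewrite ge_min lexx orbT.
split; first by lra.
move=> p; rewrite in_cons => /orP[/eqP ->|hp] /andP[h1 h2].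
  by apply: hda; apply/andP; lra.
by apply: (hes p hp); apply/andP; lra.
Qed.


Lemma pc_measurable (f : R -> R) : piecewise_constant f ->
  measurable_fun [set t : R | 0 <= t] f.
Proof.
move=> [f0 [s hs]] mD B mB.
set U := [set t : R | 0 < t /\ t \notin s /\ B (f t)].
set Fin := [set t : R | t \in [seq u <- 0 :: s | (0 <= u) && `[< B (f u) >]]].
have -> : [set t : R | 0 <= t] `&` f @^-1` B = U `|` Fin.
  apply/seteqP; split => t /=.
    move=> [ht hB].
    case: (boolP (t \in 0 :: s)) => hts.
      by right; change (t \in [seq u <- 0 :: s | (0 <= u) && `[< B (f u) >]]); rewrite mem_filter ht hts andbT /=; apply/asboolP.
    left; move: hts; rewrite in_cons negb_or => /andP[ht0 hts].
    by split => //; rewrite lt_neqAle eq_sym ht0.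
  case => [[ht [_ hB]]|]; first by split => //; apply: ltW.
  by move=> hF; move: hF; change (t \in [seq u <- 0 :: s | (0 <= u) && `[< B (f u) >]] -> 0 <= t /\ B (f t)); rewrite mem_filter => /andP[/andP[ht /asboolP hB] _].
apply: measurableU; last exact: seq_measurable.
apply: measurable_realfun.open_measurable.
rewrite openE => t [ht [hts hB]].
have [e he [het hes]] := @exists_sep t s ht hts.
rewrite /interior; apply/nbhs_ballP; exists e => // y.
rewrite /ball /= ltr_distlC => /andP[hy1 hy2].
have hfy : f t = f y.
  case: (lerP t y) => hty.
    apply: hs => //; first exact: ltW.
    by move=> p hp /andP[hp1 hp2]; apply: (hes p hp); apply/andP; lra.
  apply/esym; apply: hs; first lra; first exact: ltW.
  by move=> p hp /andP[hp1 hp2]; apply: (hes p hp); apply/andP; lra.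
split; first lra.
split; last by rewrite -hfy.
apply/negP => hys; apply: (hes y hys); apply/andP; lra.
Qed.
End Meas.

Theorem theorem3 (R : realType) (n : nat) (x : 'I_n -> R) (b : 'I_n -> rat)
  (hx01 : forall i, 0 <= x i <= 1)
  (hxsort : forall i j : 'I_n, (i <= j)%N -> x i <= x j)
  (hb : forall i, 0 <= b i)
  (rho : 'I_n -> R -> R) (T : R)
  (hsol : sc_solution (fun i => ratr (b i)) rho)
  (hlife : lifetime_at_least x rho T) :
  RR x (fun i => ratr (b i)) >= 2 / 3 * T.
Proof.
have hb' : forall i, 0 <= (ratr (b i) : R) by move=> i; rewrite ler0q.
set m := fun i => Num.max (x i) (1 - x i).
have hm : forall i, 1/2 <= m i.
  move=> i; have := hx01 i => /andP[? ?]; rewrite /m.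
  case: (lerP (x i) (1/2)) => h; [rewrite max_r|rewrite max_l]; lra.
have hRR0 : 0 <= RR x (fun i => ratr (b i)).
  apply: sumr_ge0 => i _; apply: divr_ge0 => //; have := hm i; rewrite /m; lra.
case: (lerP T 0) => hT; first lra.
have rho0 : forall i t, 0 <= t -> 0 <= rho i t by move=> i t ht; exact: ((hsol i).1.1 t ht).
have mrho : forall i, measurable_fun [set t : R | 0 <= t] (rho i).
  by move=> i; apply: pc_measurable; exact: (hsol i).1.
have pw : forall t, 0 <= t <= T -> 2/3 <= \sum_(i < n) rho i t / m i.
  move=> t ht; apply: pointwise => //.
    by move=> i; apply: rho0; case/andP: ht.
  exact: hlife.
have hmpos : forall i, 0 < m i by move=> i; have := hm i; lra.
set D := [set t : R | 0 <= t].
have mD : measurable D.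
  have -> : D = `[0, +oo[%classic.
    by apply/seteqP; split => t /=; rewrite in_itv /= andbT.
  exact: measurable_itv.
set I := (`[0, T]%classic : set R).
have mI : measurable I by apply: measurable_itv.
have ID : I `<=` D.
  by move=> t; rewrite /I /= in_itv /= => /andP[].
have mg : forall i, measurable_fun D (fun t => (rho i t / m i)%:E).
  move=> i; apply/measurable_EFinP.
  exact: (measurable_funM (mrho i) (measurable_cst _)).
have g0 : forall i t, D t -> (0 <= ((rho i t / m i)%:E : \bar R))%E.
  move=> i t ht; rewrite lee_fin; apply: divr_ge0; [exact: rho0|exact: ltW].
have mgs : measurable_fun D (fun t => (\sum_(i < n) (rho i t / m i)%:E)%E).
  exact: emeasurable_sum.
have gs0 : forall t, D t -> (0 <= \sum_(i < n) ((rho i t / m i)%:E : \bar R))%E.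
  by move=> t ht; apply: sume_ge0 => i _; apply: g0.
rewrite -lee_fin.
have step1 : ((2 / 3 * T)%:E = \int[lebesgue_measure]_(t in I) (cst (2/3 : R)%:E) t)%E.
  rewrite integral_cst // /I.
  have := @lebesgue_measure_itv R (Interval (BLeft 0) (BRight T)).
  rewrite /= lte_fin hT => ->.
  by rewrite oppr0 -EFinD addr0 -EFinM.
rewrite step1.
apply: (@le_trans _ _ (\int[lebesgue_measure]_(t in I) (\sum_(i < n) (rho i t / m i)%:E))%E).
  apply: ge0_le_integral => //.
  - by move=> t _; rewrite lee_fin; lra.
  - exact: measurable_funS mgs.
  - move=> t; rewrite /I /= in_itv /= => ht.
    by rewrite sumEFin lee_fin; apply: pw.
apply: (@le_trans _ _ (\int[lebesgue_measure]_(t in D) (\sum_(i < n) (rho i t / m i)%:E))%E).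
  exact: ge0_subset_integral.
rewrite ge0_integral_sum //.
rewrite /RR -sumEFin.
apply: lee_sum => i _.
have -> : (\int[lebesgue_measure]_(t in D) (rho i t / m i)%:E =
    (m i)^-1%:E * \int[lebesgue_measure]_(t in D) (rho i t)%:E)%E.
  rewrite -ge0_integralZl_EFin //.
  - by apply: eq_integral => t _; rewrite -EFinM mulrC.
  - by move=> t ht; rewrite lee_fin; exact: rho0.
  - by apply/measurable_EFinP; exact: mrho.
  - by rewrite invr_ge0; apply: ltW.
rewrite mulrC EFinM.
apply: lee_wpmul2l; first by rewrite lee_fin invr_ge0; apply: ltW.
exact: (hsol i).2.
Qed.
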